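(* Let $p$ and $q$ be distinct primes. (i) If $n = p^2 q$ (with $p, q \geq 2$), then $\Gamma(\mathbb{Z}_n)$ is very cost effective. (ii) If $n = p^2 q^2$ with $p, q \geq 3$ and $p < q$, then $\Gamma(\mathbb{Z}_n)$ is very cost effective.
   Context: $\mathbb{Z}_n$ is the ring of residue classes modulo $n$. The zero-divisor graph $\Gamma(\mathbb{Z}_n)$ has as vertices the nonzero zero-divisors of $\mathbb{Z}_n$, two distinct vertices being adjacent iff their product is $0$. For a graph $G=(V,E)$ and $S\subseteq V$, a vertex $v\in S$ is very cost effective if $|N(v)\cap S| < |N(v)\cap (V\setminus S)|$, where $N(v)$ is the open neighborhood of $v$; $S$ is very cost effective if every vertex of $S$ is. A bipartition $\{S, V\setminus S\}$ is very cost effective if both parts are very cost effective sets, and $G$ is very cost effective if it has a very cost effective bipartition. *)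

(* Defs.v *)
From mathcomp Require Import all_boot.
Set Implicit Arguments. Unset Strict Implicit. Unset Printing Implicit Defensive.

Definition zmul_zero (n : nat) (x y : 'I_n) : bool := (x * y) %% n == 0.

Definition zdg_vertices (n : nat) : {set 'I_n} :=
  [set x : 'I_n | (val x != 0) && [exists y : 'I_n, (val y != 0) && zmul_zero x y]].

Definition zdg_adj (n : nat) : rel 'I_n :=
  fun x y => [&& x \in zdg_vertices n, y \in zdg_vertices n, x != y & zmul_zero x y].

Definition nbhd (T : finType) (V : {set T}) (adj : rel T) (v : T) : {set T} :=
  [set u in V | adj v u].

Definition very_cost_effective_vertex (T : finType) (V : {set T}) (adj : rel T)
    (S : {set T}) (v : T) : bool :=
  #|nbhd V adj v :&: S| < #|nbhd V adj v :&: (V :\: S)|.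

Definition very_cost_effective_set (T : finType) (V : {set T}) (adj : rel T)
    (S : {set T}) : bool :=
  [forall v in S, very_cost_effective_vertex V adj S v].

Definition very_cost_effective_graph (T : finType) (V : {set T}) (adj : rel T) : Prop :=
  exists S : {set T}, S \subset V /\ very_cost_effective_set V adj S
                      /\ very_cost_effective_set V adj (V :\: S).

Definition zdg_very_cost_effective (n : nat) : Prop :=
  very_cost_effective_graph (zdg_vertices n) (@zdg_adj n).

(* Main.v *)
Require Import Defs.
From mathcomp Require Import all_boot.
Set Implicit Arguments. Unset Strict Implicit. Unset Printing Implicit Defensive.

Lemma inj_lt (T : finType) (A B : {set T}) (f : T -> T) b :
  {in A &, injective f} -> {in A, forall x, f x \in B} -> b \in B ->
  {in A, forall x, f x != b} -> #|A| < #|B|.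
Proof.
move=> fi fAB bB fb; rewrite -(card_in_imset fi).
have sub : f @: A \subset B :\ b.
  apply/subsetP=> y /imsetP[x xA ->]; rewrite !inE fb // fAB //.
apply: (leq_ltn_trans (subset_leq_card sub)).
by rewrite (cardsD1 b B) bB.
Qed.

Lemma dvd_modn d n a : d %| n -> (d %| a %% n) = (d %| a).
Proof. by move=> dn; rewrite /dvdn (modn_dvdm _ dn). Qed.

Lemma dvd_sq r y : r ^ 2 %| y -> r %| y.
Proof. by apply: dvdn_trans; rewrite expnS dvdn_mulr. Qed.

Lemma dvd2M r x y : prime r ->
  (r ^ 2 %| x * y) = [|| r ^ 2 %| x, r ^ 2 %| y | (r %| x) && (r %| y)].
Proof.
move=> rP.
have cop z : ~~ (r %| z) -> coprime (r ^ 2) z.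
  by move=> h; rewrite coprime_pexpl // prime_coprime.
case: (boolP (r %| y)) => ry.
  case: (boolP (r %| x)) => rx.
    rewrite !orbT; apply/esym; rewrite expnS expn1 dvdn_mul //.
  rewrite /= orbF Gauss_dvdr ?cop //.
  by case: (boolP (r^2 %| x)) => [/dvd_sq|//]; rewrite (negbTE rx).
rewrite andbF orbF Gauss_dvdl ?cop //.
by case: (boolP (r^2 %| y)) => [/dvd_sq|]; rewrite ?(negbTE ry) ?orbF.
Qed.

Lemma shift_inj n (x y : nat) c : x < n -> y < n -> (x + c) %% n = (y + c) %% n -> x = y.
Proof.
move=> xn yn /eqP; rewrite eqn_modDr !modn_small //; exact/eqP.
Qed.

Lemma atPg p q k i j : prime p -> prime q -> p != q -> (p ^ k %| p ^ i * q ^ j) = (k <= i).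
Proof.
move=> pP qP pq; rewrite Gauss_dvdl ?dvdn_Pexp2l ?prime_gt1 //.
by apply: coprimeXl; apply: coprimeXr; rewrite prime_coprime // dvdn_prime2 // (negbTE pq).
Qed.

Lemma atQg p q k i j : prime p -> prime q -> p != q -> (q ^ k %| p ^ i * q ^ j) = (k <= j).
Proof.
by move=> pP qP pq; rewrite mulnC atPg // eq_sym.
Qed.

Lemma inj_lt0 (T : finType) (A B : {set T}) b :
  (forall x, x \in A -> False) -> b \in B -> #|A| < #|B|.
Proof.
move=> A0 bB; have -> : A = set0 by apply/setP => x; rewrite inE; apply/negP => /A0.
by rewrite cards0 (cardD1 b) bB.
Qed.

Ltac bf := repeat match goal with
 | |- context [?d %| ?x] => case: (d %| x)
 end.


Section Two.
Variables p q : nat.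
Hypotheses (pP : prime p) (qP : prime q) (pnq : p != q).
Hypotheses (p3 : 3 <= p) (q3 : 3 <= q).
Local Notation n := (p ^ 2 * q ^ 2).

Lemma pq_f : (p %| q) = false.
Proof. by rewrite dvdn_prime2 // (negbTE pnq). Qed.
Lemma qp_f : (q %| p) = false.
Proof. by rewrite dvdn_prime2 // eq_sym (negbTE pnq). Qed.
Lemma p_gt0 : 0 < p. Proof. exact: prime_gt0. Qed.
Lemma q_gt0 : 0 < q. Proof. exact: prime_gt0. Qed.
Lemma n_gt0 : 0 < n. Proof. by rewrite muln_gt0 !expn_gt0 p_gt0 q_gt0. Qed.
Lemma cop_pq : coprime p q. Proof. by rewrite prime_coprime // pq_f. Qed.
Lemma cop_n : coprime (p ^ 2) (q ^ 2).
Proof. by rewrite coprime_pexpl // coprime_pexpr // cop_pq. Qed.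

Lemma adjE x y : (n %| x * y) =
  [|| p ^ 2 %| x, p ^ 2 %| y | (p %| x) && (p %| y)] &&
  [|| q ^ 2 %| x, q ^ 2 %| y | (q %| x) && (q %| y)].
Proof. by rewrite Gauss_dvd ?cop_n // !dvd2M. Qed.

Lemma zero_at (a : 'I_n) : (nat_of_ord a != 0) = ~~ ((p ^ 2 %| a) && (q ^ 2 %| a)).
Proof.
rewrite -Gauss_dvd ?cop_n //.
case: (posnP a) => [->|a0]; first by rewrite dvdn0.
apply/esym/negP => /(dvdn_leq a0); rewrite leqNgt ltn_ord.
by [].
Qed.

Lemma vE (x : 'I_n) : (x \in zdg_vertices n) = ~~ ((p ^ 2 %| x) && (q ^ 2 %| x)) && ((p %| x) || (q %| x)).
Proof.
rewrite inE -zero_at; apply/andP/andP => -[nz H]; split => //.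
  case/existsP: H => y /andP[ynz dv].
  apply/negPn/negP; rewrite negb_or => /andP[px qx].
  have : n %| y.
    move: dv; rewrite /zmul_zero -/(dvdn n (x * y)) Gauss_dvdr //.
    by rewrite coprimeMl !coprime_pexpl // !prime_coprime // px qx.
  move/(dvdn_leq); rewrite lt0n ynz leqNgt ltn_ord; by move/(_ isT).
apply/existsP; case/orP: H => [px|qx].
  have lt : p * q ^ 2 < n.
    by rewrite expnS expn1 -mulnA ltn_Pmull // ?muln_gt0 ?expn_gt0 ?p_gt0 ?q_gt0 // (leq_trans _ p3).
  exists (Ordinal lt); rewrite /= -lt0n muln_gt0 expn_gt0 p_gt0 q_gt0 /=.
  by rewrite /zmul_zero -/(dvdn n _) adjE /= px (dvdn_mulr _ (dvdnn p)) (dvdn_mull _ (dvdnn (q^2))) !orbT.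
have lt : p ^ 2 * q < n.
  by rewrite [q ^ 2]expnS expn1 mulnA ltn_Pmulr // ?muln_gt0 ?expn_gt0 ?p_gt0 ?q_gt0 // (leq_trans _ q3).
exists (Ordinal lt); rewrite /= -lt0n muln_gt0 expn_gt0 p_gt0 q_gt0 /=.
by rewrite /zmul_zero -/(dvdn n _) adjE /= qx (dvdn_mulr _ (dvdnn (p^2))) (dvdn_mull _ (dvdnn q)) !orbT.
Qed.


Lemma oddp : odd p.
Proof. by case: (even_prime pP) => // p2; move: p3; rewrite p2. Qed.
Lemma oddq : odd q.
Proof. by case: (even_prime qP) => // q2; move: q3; rewrite q2. Qed.
Lemma pq_gt0 : 0 < p * q. Proof. by rewrite muln_gt0 p_gt0 q_gt0. Qed.

Lemma no_consec r m : 1 < r -> r %| m -> r %| m.+1 -> False.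
Proof.
move=> r1 rm; rewrite -addn1 dvdn_addr // dvdn1 => /eqP r1'.
by move: r1; rewrite r1'.
Qed.

Lemma M_small m : 0 < m < p * q -> ~~ ((p %| m) && (q %| m)).
Proof.
case/andP=> m0 mlt; rewrite -Gauss_dvd ?cop_pq //.
by apply/negP => /(dvdn_leq m0); rewrite leqNgt mlt.
Qed.

Definition partner m := if odd m then m.+1 else m.-1.
Definition Xm m := (q %| m) || [&& ~~ (q %| partner m), ~~ (p %| m) & (p %| partner m) || odd m].
Definition inX (x : nat) := if (p %| x) && (q %| x) then Xm (x %/ (p * q))
  else (p ^ 2 %| x) || (q %| x) && ~~ (q ^ 2 %| x).

Lemma partnerK m : 0 < m -> partner (partner m) = m.
Proof.
rewrite /partner; case: m => // m _; case om: (odd m.+1); move: om => /=;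
 case: (odd m) => //=.
Qed.

Lemma partner_odd m : 0 < m -> odd (partner m) = ~~ odd m.
Proof.
rewrite /partner; case: m => // m _; case om: (odd m.+1); move: om => /=;
 case: (odd m) => //=.
Qed.

Lemma partner_bound m : 0 < m < p * q -> 0 < partner m < p * q.
Proof.
case/andP => m0 mlt; rewrite /partner; case: ifP => om.
  rewrite /= ltn_neqAle mlt andbT; apply/negP => /eqP e.
  by move: (oddM p q); rewrite -e /= om oddp oddq.
case: m om m0 mlt => // [] [|m] //= om _ mlt.
by rewrite (leq_trans _ mlt).
Qed.

Lemma Xm_partner m : 0 < m < p * q -> Xm (partner m) = ~~ Xm m.
Proof.
move=> hm; have hm' := partner_bound hm.
have m0 : 0 < m by case/andP: hm.
rewrite /Xm partnerK // partner_odd //.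
have cons r : 1 < r -> ~~ ((r %| m) && (r %| partner m)).
  move=> r1; rewrite /partner; case: ifP => _; apply/negP => /andP[a b].
    exact: (no_consec r1 a b).
  by move: a; rewrite -(prednK m0) => a; exact: (no_consec r1 b a).
have c1 := cons q (prime_gt1 qP).
have c2 := cons p (prime_gt1 pP).
have c3 := M_small hm.
have c4 := M_small hm'.
move: c1 c2 c3 c4.
by case: (q %| m); case: (q %| partner m); case: (p %| m); case: (p %| partner m); case: (odd m).
Qed.

Lemma n_sq : n = (p * q) * (p * q).
Proof. by rewrite -expnMn expnS expn1. Qed.

Lemma M_div (a : nat) : p %| a -> q %| a -> a = a %/ (p * q) * (p * q).
Proof. by move=> pa qa; rewrite divnK // Gauss_dvd ?cop_pq // pa qa. Qed.

Lemma M_bounds (a : 'I_n) : nat_of_ord a != 0 -> p %| a -> q %| a -> 0 < a %/ (p * q) < p * q.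
Proof.
move=> a0 pa qa; have e := M_div pa qa.
have al : a %/ (p * q) * (p * q) < (p * q) * (p * q) by rewrite -e -n_sq ltn_ord.
rewrite ltn_pmul2r ?pq_gt0 // in al.
rewrite al andbT lt0n; apply/negP => /eqP m0.
by move: a0; rewrite e m0.
Qed.

Lemma M_P2 (a : nat) : p %| a -> q %| a -> (p ^ 2 %| a) = (p %| a %/ (p * q)).
Proof.
move=> pa qa; rewrite {1}(M_div pa qa) mulnA mulnAC expnS expn1.
rewrite dvdn_pmul2r ?p_gt0 //.
by rewrite Gauss_dvdl // prime_coprime // pq_f.
Qed.

Lemma M_Q2 (a : nat) : p %| a -> q %| a -> (q ^ 2 %| a) = (q %| a %/ (p * q)).
Proof.
move=> pa qa; rewrite {1}(M_div pa qa) mulnA expnS expn1.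
rewrite dvdn_pmul2r ?q_gt0 //.
by rewrite Gauss_dvdl // prime_coprime // qp_f.
Qed.

Lemma inX_nonM a : ~~ ((p %| a) && (q %| a)) ->
  inX a = (p ^ 2 %| a) || (q %| a) && ~~ (q ^ 2 %| a).
Proof. by rewrite /inX => /negbTE ->. Qed.

Lemma inXf (a : 'I_n) : nat_of_ord a != 0 ->
  [&& (p %| a) && (q %| a) && (q ^ 2 %| a) ==> inX a,
      (p %| a) && (q %| a) && (p ^ 2 %| a) ==> ~~ inX a &
      ~~ ((p %| a) && (q %| a)) ==> (inX a == (p ^ 2 %| a) || (q %| a) && ~~ (q ^ 2 %| a))].
Proof.
move=> a0; case: (boolP ((p %| a) && (q %| a))) => [/andP[pa qa]|nM] /=.
  have hb := M_bounds a0 pa qa.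
  rewrite /inX pa qa /= M_P2 // M_Q2 //.
  apply/and3P; split => //; apply/implyP => h.
    by rewrite /Xm h.
  rewrite /Xm h /= andbF orbF.
  by move: (M_small hb); rewrite h.
by rewrite inX_nonM.
Qed.

Definition sig (y : 'I_n) : 'I_n := insubd y (p * q * partner (y %/ (p * q))).

Lemma sigE (a : 'I_n) : nat_of_ord a != 0 -> p %| a -> q %| a ->
  nat_of_ord (sig a) = p * q * partner (a %/ (p * q)).
Proof.
move=> a0 pa qa; rewrite /sig val_insubd.
have /partner_bound/andP[_ h] := M_bounds a0 pa qa.
have -> // : p * q * partner (a %/ (p * q)) < n.
by move: (partner _) h => k h; rewrite n_sq ltn_pmul2l ?pq_gt0 // h.
Qed.

Lemma sig_at (a : 'I_n) : nat_of_ord a != 0 -> p %| a -> q %| a ->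
  [&& nat_of_ord (sig a) != 0, p %| sig a, q %| sig a & inX (sig a) == ~~ inX a].
Proof.
move=> a0 pa qa; rewrite sigE //.
have hb := M_bounds a0 pa qa.
have /andP[h0 _] := partner_bound hb.
move: (partner _) h0 (Xm_partner hb) => k k0 Xk.
have P1 : p %| p * q * k by rewrite -mulnA dvdn_mulr.
have Q1 : q %| p * q * k by rewrite mulnAC dvdn_mull.
rewrite P1 Q1 muln_eq0 negb_or -!lt0n pq_gt0 k0 /=.
rewrite /inX P1 Q1 pa qa /= mulKn ?pq_gt0 //.
by rewrite Xk.
Qed.

Lemma sig_inj (a b : 'I_n) : nat_of_ord a != 0 -> p %| a -> q %| a ->
  nat_of_ord b != 0 -> p %| b -> q %| b -> sig a = sig b -> a = b.
Proof.
move=> a0 pa qa b0 pb qb /(congr1 (@nat_of_ord _)); rewrite !sigE //.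
move/eqP; rewrite eqn_pmul2l ?pq_gt0 // => /eqP e.
have : a %/ (p * q) = b %/ (p * q).
  have ha := M_bounds a0 pa qa; have hb := M_bounds b0 pb qb.
  rewrite -(partnerK (m := a %/ _)) ?e ?partnerK //; by case/andP: hb; case/andP: ha.
move=> e2; apply: val_inj => /=.
by rewrite (M_div pa qa) (M_div pb qb) e2.
Qed.


Lemma atP k i j : (p ^ k %| p ^ i * q ^ j) = (k <= i). Proof. exact: atPg. Qed.
Lemma atQ k i j : (q ^ k %| p ^ i * q ^ j) = (k <= j). Proof. exact: atQg. Qed.
Lemma atP1 i j : (p %| p ^ i * q ^ j) = (0 < i).
Proof. by rewrite -{1}(expn1 p) atP. Qed.
Lemma atQ1 i j : (q %| p ^ i * q ^ j) = (0 < j).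
Proof. by rewrite -{1}(expn1 q) atQ. Qed.

Lemma ltc i j : i <= 2 -> j <= 2 -> (i < 2) || (j < 2) -> p ^ i * q ^ j < n.
Proof.
move=> i2 j2 /orP[] h.
  apply: (@leq_trans (p ^ 2 * q ^ j)).
    by rewrite ltn_pmul2r ?expn_gt0 ?q_gt0 // ltn_exp2l ?prime_gt1.
  by rewrite leq_mul2l leq_exp2l ?prime_gt1 // j2 orbT.
apply: (@leq_trans (p ^ i * q ^ 2)).
  by rewrite ltn_pmul2l ?expn_gt0 ?p_gt0 // ltn_exp2l ?prime_gt1.
by rewrite leq_mul2r leq_exp2l ?prime_gt1 // i2 orbT.
Qed.

Definition sh (c : nat) (y : 'I_n) : 'I_n := Ordinal (ltn_pmod (y + c) n_gt0).

Lemma sh_inj c : injective (sh c).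
Proof. move=> x y /(congr1 (@nat_of_ord _)) /= e; apply: val_inj; exact: (shift_inj (ltn_ord x) (ltn_ord y) e). Qed.

Lemma sh_b c (hc : c < n) (y : 'I_n) : nat_of_ord y != 0 -> sh c y != Ordinal hc.
Proof.
move=> y0; apply/negP => /eqP /(congr1 (@nat_of_ord _)) /= e.
have : y = 0 :> nat.
  apply: (shift_inj (ltn_ord y) n_gt0 (c := c)); by rewrite e add0n modn_small.
by move/eqP: y0.
Qed.

Lemma dvd_n d : d \in [:: p; p ^ 2; q; q ^ 2] -> d %| n.
Proof.
rewrite !inE => /or4P[] /eqP ->.
- by rewrite atP1.
- by rewrite atP.
- by rewrite atQ1.
- by rewrite atQ.
Qed.

Lemma sh_at d c (y : 'I_n) : d \in [:: p; p ^ 2; q; q ^ 2] -> d %| c -> (d %| sh c y) = (d %| y).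
Proof. by move=> dn dc; rewrite /= dvd_modn ?dvd_n // dvdn_addl. Qed.

Lemma sh_at2 d c (y : 'I_n) : d \in [:: p; p ^ 2; q; q ^ 2] -> d %| y -> (d %| sh c y) = (d %| c).
Proof. by move=> dn dy; rewrite /= dvd_modn ?dvd_n // dvdn_addr. Qed.

Lemma at2 (a : nat) : ((p ^ 2 %| a) ==> (p %| a)) && ((q ^ 2 %| a) ==> (q %| a)).
Proof. by apply/andP; split; apply/implyP => /dvd_sq. Qed.

Lemma nz_at (a : 'I_n) : nat_of_ord a != 0 -> ~~ ((p ^ 2 %| a) && (q ^ 2 %| a)).
Proof. by rewrite zero_at. Qed.

Definition Aset (v : 'I_n) (s : bool) :=
  [set y : 'I_n | [&& y \in zdg_vertices n, v != y, n %| v * y & inX y == s]].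


Ltac leaf := simpl; intros; try done;
  match goal with H : is_true false |- _ => discriminate H end.

Lemma inA (v y : 'I_n) s : (y \in Aset v s) = [&& y \in zdg_vertices n, v != y, n %| v * y & inX y == s].
Proof. by rewrite inE. Qed.

Lemma V0 (y : 'I_n) : y \in zdg_vertices n -> nat_of_ord y != 0.
Proof. by rewrite vE -zero_at => /andP[]. Qed.

Lemma side_M (v : 'I_n) : nat_of_ord v != 0 -> p %| v -> q %| v ->
  #|Aset v (inX v)| < #|Aset v (~~ inX v)|.
Proof.
move=> v0 pv qv.
pose c := if inX v then p ^ 1 * q ^ 2 else p ^ 2 * q ^ 1.
have cp : p %| c by rewrite /c; case: (inX v); rewrite atP1.
have cq : q %| c by rewrite /c; case: (inX v); rewrite atQ1.
have cP2 : (p ^ 2 %| c) = ~~ inX v by rewrite /c; case: (inX v); rewrite atP.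
have cQ2 : (q ^ 2 %| c) = inX v by rewrite /c; case: (inX v); rewrite atQ.
clearbody c.
have fvv := inXf v0; rewrite pv qv /= in fvv.
pose f (y : 'I_n) := if (p %| y) && (q %| y) then sig y else sh c y.
have Mf : forall y : 'I_n, nat_of_ord y != 0 -> ((p %| f y) && (q %| f y)) = ((p %| y) && (q %| y)).
  move=> y y0; rewrite /f; case: ifP => [/andP[py qy]|nM].
    by have /and4P[_ -> -> _] := sig_at y0 py qy.
  by rewrite !sh_at ?inE ?eqxx ?orbT // nM.
have sigB : sig v \in Aset v (~~ inX v).
  have /and4P[s0 sp sq si] := sig_at v0 pv qv.
  rewrite inA; apply/and4P; split => //.
  - by rewrite vE -zero_at s0 sp.
  - by apply/eqP => e; move: si; rewrite -e; case: (inX v).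
  - by rewrite adjE pv qv sp sq !orbT.
apply: (inj_lt (f := f) (b := sig v)) => //.
- move=> y1 y2; rewrite !inA => /and4P[V1 _ _ _] /and4P[V2 _ _ _] e.
  have y10 := V0 V1; have y20 := V0 V2.
  have hM : ((p %| y1) && (q %| y1)) = ((p %| y2) && (q %| y2)) by rewrite -Mf // e Mf.
  move: e; rewrite /f; case: ifP => [/andP[p1 q1]|n1]; case: ifP => [/andP[p2 q2]|n2].
  + by apply: sig_inj.
  + by move: hM; rewrite p1 q1 n2.
  + by move: hM; rewrite p2 q2 n1.
  + exact: sh_inj.
- move=> y; rewrite inA => /and4P[yV vy adj iy].
  have y0 := V0 yV.
  rewrite /f; case: ifP => [/andP[py qy]|nM].
    have /and4P[s0 sp sq si] := sig_at y0 py qy.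
    rewrite inA; apply/and4P; split.
    - by rewrite vE -zero_at s0 sp.
    - by apply/eqP => e; move: si iy; rewrite -e; case: (inX v); case: (inX y).
    - by rewrite adjE pv qv sp sq !orbT.
    - by move: si iy; case: (inX v); case: (inX y); case: (inX (sig y)).
  have hp : (p %| sh c y) = (p %| y) by rewrite sh_at ?inE ?eqxx.
  have hq : (q %| sh c y) = (q %| y) by rewrite sh_at ?inE ?eqxx ?orbT.
  have fM : ((p %| sh c y) && (q %| sh c y)) = false by rewrite hp hq nM.
  have vfy : v != sh c y by apply/eqP => e; move: fM; rewrite -e pv qv.
  have G1 : ~~ inX v ==> ((p ^ 2 %| sh c y) == (p ^ 2 %| y)).
    by apply/implyP => h; rewrite sh_at ?cP2 ?inE ?eqxx ?orbT.
  have G2 : inX v ==> ((p ^ 2 %| y) ==> ~~ (p ^ 2 %| sh c y)).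
    by apply/implyP => h; apply/implyP => h2; rewrite sh_at2 ?inE ?eqxx ?orbT // cP2 h.
  have G3 : inX v ==> ((q ^ 2 %| sh c y) == (q ^ 2 %| y)).
    by apply/implyP => h; rewrite sh_at ?cQ2 ?inE ?eqxx ?orbT.
  have G4 : ~~ inX v ==> ((q ^ 2 %| y) ==> ~~ (q ^ 2 %| sh c y)).
    by apply/implyP => h; apply/implyP => h2; rewrite sh_at2 ?inE ?eqxx ?orbT // cQ2 (negbTE h).
  rewrite inA vE adjE vfy (inX_nonM (negbT fM)).
  move: iy; rewrite (inX_nonM (negbT nM)).
  move: adj yV fvv (at2 y) (at2 v) (at2 (sh c y)) G1 G2 G3 G4 nM.
  rewrite adjE vE hp hq pv qv.
  case: (inX v); bf; leaf.
- move=> y; rewrite inA => /and4P[yV vy _ _]; apply/eqP => e.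
  have y0 := V0 yV.
  have /and4P[_ sp sq _] := sig_at v0 pv qv.
  move: e; rewrite /f; case: ifP => [/andP[py qy]|nM] e.
    by move: vy; rewrite (sig_inj v0 pv qv y0 py qy (esym e)) eqxx.
  by have := Mf y y0; rewrite /f nM e sp sq.
Qed.


Lemma neqd d (v a : 'I_n) : (d %| v) != (d %| a) -> v != a.
Proof. by apply: contra => /eqP ->. Qed.

Lemma side_nonM (v : 'I_n) : v \in zdg_vertices n -> ~~ ((p %| v) && (q %| v)) ->
  #|Aset v (inX v)| < #|Aset v (~~ inX v)|.
Proof.
move=> vV nMv; have v0 := V0 vV; have iv := inX_nonM nMv.
have av := at2 v; have zv := nz_at v0.
move: (vV); rewrite vE => /andP[_ vpq].
have Afacts : forall y : 'I_n, y \in Aset v (inX v) ->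
   [/\ nat_of_ord y != 0, v != y, n %| v * y & inX y = inX v].
  by move=> y; rewrite inA => /and4P[yV vy adj /eqP iy]; split => //; apply: V0.
case Pv: (p %| v).
  have Qv : (q %| v) = false by move: nMv; rewrite Pv => /negbTE.
  case P2v: (p ^ 2 %| v).
    have hc : p ^ 0 * q ^ 2 < n by apply: ltc.
    apply: (inj_lt (f := sh (p ^ 0 * q ^ 2)) (b := Ordinal hc)).
    - by move=> y1 y2 _ _; apply: sh_inj.
    - move=> y /Afacts[y0 vy adj iy].
      have [py q2y] : (p %| y) /\ (q ^ 2 %| y).
        move: adj iy (inXf y0) (at2 y) (nz_at y0) av zv; rewrite adjE iv Pv Qv P2v.
        by case: (inX y); bf; leaf.
      have h1 : (p %| sh (p ^ 0 * q ^ 2) y) = false by rewrite sh_at2 ?inE ?eqxx // atP1.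
      have h2 : (p ^ 2 %| sh (p ^ 0 * q ^ 2) y) = false.
        by apply/negP => /dvd_sq; rewrite h1.
      have h3 : (q ^ 2 %| sh (p ^ 0 * q ^ 2) y) by rewrite sh_at ?inE ?eqxx ?orbT // atQ.
      have h4 : (q %| sh (p ^ 0 * q ^ 2) y) by apply: dvd_sq.
      rewrite inA; apply/and4P; split.
      + by rewrite vE h1 h2 h4.
      + by apply: (neqd (d := q)); rewrite Qv h4.
      + by rewrite adjE P2v h3 !orbT.
      + by rewrite inX_nonM ?h1 // h2 h3 h4 iv P2v.
    - rewrite inA; apply/and4P; split => /=.
      + by rewrite vE atP atQ atP1 atQ1.
      + by apply: (neqd (d := q)); rewrite Qv atQ1.
      + by rewrite adjE P2v atQ !orbT.
      + by rewrite inX_nonM ?atP1 // atP atQ atQ1 iv P2v.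
    - move=> y /Afacts[y0 _ _ _]; exact: sh_b.
  have hc : p ^ 1 * q ^ 2 < n by apply: ltc.
  apply: (inj_lt0 (b := Ordinal hc)).
    move=> y /Afacts[y0 vy adj iy].
    move: adj iy (inXf y0) (at2 y) (nz_at y0) av zv; rewrite adjE iv Pv Qv P2v.
    by case: (inX y); bf; leaf.
  have b0 : nat_of_ord (Ordinal hc) != 0 by rewrite zero_at /= atP.
  rewrite inA; apply/and4P; split => /=.
  + by rewrite vE atP atQ atP1 atQ1.
  + by apply: (neqd (d := q)); rewrite Qv atQ1.
  + by rewrite adjE Pv atQ atP1 !orbT.
  + move: (inXf b0) => /=; rewrite atP1 atQ1 atQ /= iv P2v Qv /=.
    by case/andP => ->.
have Qv : (q %| v) by move: vpq; rewrite Pv.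
have P2v : (p ^ 2 %| v) = false by apply/negP => /dvd_sq; rewrite Pv.
case Q2v: (q ^ 2 %| v).
  have hc : p ^ 2 * q ^ 0 < n by apply: ltc.
  apply: (inj_lt (f := sh (p ^ 2 * q ^ 0)) (b := Ordinal hc)).
  - by move=> y1 y2 _ _; apply: sh_inj.
  - move=> y /Afacts[y0 vy adj iy].
    have [p2y qy] : (p ^ 2 %| y) /\ (q %| y).
      move: adj iy (inXf y0) (at2 y) (nz_at y0) av zv; rewrite adjE iv Pv Qv Q2v.
      by case: (inX y); bf; leaf.
    have h1 : (q %| sh (p ^ 2 * q ^ 0) y) = false by rewrite sh_at2 ?inE ?eqxx ?orbT // atQ1.
    have h2 : (q ^ 2 %| sh (p ^ 2 * q ^ 0) y) = false.
      by apply/negP => /dvd_sq; rewrite h1.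
    have h3 : (p ^ 2 %| sh (p ^ 2 * q ^ 0) y) by rewrite sh_at ?inE ?eqxx ?orbT // atP.
    have h4 : (p %| sh (p ^ 2 * q ^ 0) y) by apply: dvd_sq.
    rewrite inA; apply/and4P; split.
    + by rewrite vE h2 h4 andbF.
    + by apply: (neqd (d := p)); rewrite Pv h4.
    + by rewrite adjE Q2v h3 !orbT.
    + by rewrite inX_nonM ?h1 ?andbF // h2 h3 iv P2v Qv Q2v.
  - rewrite inA; apply/and4P; split => /=.
    + by rewrite vE atP atQ atP1 atQ1.
    + by apply: (neqd (d := p)); rewrite Pv atP1.
    + by rewrite adjE Q2v atP !orbT.
    + by rewrite inX_nonM ?atQ1 ?andbF // atP iv Q2v P2v Qv.
  - move=> y /Afacts[y0 _ _ _]; exact: sh_b.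
have hc : p ^ 2 * q ^ 1 < n by apply: ltc.
apply: (inj_lt0 (b := Ordinal hc)).
  move=> y /Afacts[y0 vy adj iy].
  move: adj iy (inXf y0) (at2 y) (nz_at y0) av zv; rewrite adjE iv Pv Qv Q2v.
  by case: (inX y); bf; leaf.
have b0 : nat_of_ord (Ordinal hc) != 0 by rewrite zero_at /= atQ andbF.
rewrite inA; apply/and4P; split => /=.
+ by rewrite vE atP atQ atP1 atQ1.
+ by apply: (neqd (d := p)); rewrite Pv atP1.
+ by rewrite adjE Qv atP atQ1 !orbT.
+ move: (inXf b0) => /=; rewrite atP1 atQ1 atP atQ /= iv P2v Q2v Qv /=.
  by case/andP => /negbTE ->.
Qed.

Lemma side (v : 'I_n) : v \in zdg_vertices n -> #|Aset v (inX v)| < #|Aset v (~~ inX v)|.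
Proof.
move=> vV; case: (boolP ((p %| v) && (q %| v))) => [/andP[pv qv]|nM].
  exact: side_M (V0 vV) pv qv.
exact: side_nonM.
Qed.


Lemma main2 : zdg_very_cost_effective n.
Proof.
pose S := [set x in zdg_vertices n | inX x].
have E (v : 'I_n) (T : {set 'I_n}) s : v \in zdg_vertices n ->
   (forall y, (y \in T) = (y \in zdg_vertices n) && (inX y == s)) ->
   nbhd (zdg_vertices n) (@zdg_adj n) v :&: T = Aset v s.
  move=> vV hT; apply/setP => y; rewrite in_setI hT inA /nbhd in_set /zdg_adj /zmul_zero vV /=.
  by case: (y \in zdg_vertices n); case: (v != y); case: (inX y == s).
have inS y : (y \in S) = (y \in zdg_vertices n) && inX y by rewrite /S in_set.
exists S; split; first by apply/subsetP => x; rewrite inS => /andP[].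
split; apply/forall_inP => v.
  rewrite inS; case/andP => vV iv; rewrite /very_cost_effective_vertex.
  rewrite (E v S true vV) ?(E v _ false vV); first by have := side vV; rewrite iv.
    by move=> y; rewrite in_setD inS; case: (y \in zdg_vertices n); case: (inX y).
  by move=> y; rewrite inS; case: (inX y).
rewrite in_setD inS; case/andP => niv vV; rewrite vV /= in niv.
rewrite /very_cost_effective_vertex.
rewrite (E v _ false vV) ?(E v _ true vV); first by have := side vV; rewrite (negbTE niv).
  by move=> y; rewrite !in_setD inS; case: (y \in zdg_vertices n); case: (inX y).
by move=> y; rewrite in_setD inS; case: (y \in zdg_vertices n); case: (inX y).
Qed.

End Two.


Section One.
Variables p q : nat.
Hypotheses (pP : prime p) (qP : prime q) (pnq : p != q).
Local Notation n := (p ^ 2 * q).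

Lemma p_gt0' : 0 < p. Proof. exact: prime_gt0. Qed.
Lemma q_gt0' : 0 < q. Proof. exact: prime_gt0. Qed.
Lemma n_gt0' : 0 < n. Proof. by rewrite muln_gt0 expn_gt0 p_gt0' q_gt0'. Qed.
Lemma cop_n' : coprime (p ^ 2) q.
Proof. by rewrite coprime_pexpl // prime_coprime // dvdn_prime2 // (negbTE pnq). Qed.

Lemma adjE' x y : (n %| x * y) =
  [|| p ^ 2 %| x, p ^ 2 %| y | (p %| x) && (p %| y)] && ((q %| x) || (q %| y)).
Proof. by rewrite Gauss_dvd ?cop_n' // dvd2M // Euclid_dvdM. Qed.

Lemma zero_at' (a : 'I_n) : (nat_of_ord a != 0) = ~~ ((p ^ 2 %| a) && (q %| a)).
Proof.
rewrite -Gauss_dvd ?cop_n' //.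
case: (posnP a) => [->|a0]; first by rewrite dvdn0.
apply/esym/negP => /(dvdn_leq a0); rewrite leqNgt ltn_ord.
by [].
Qed.

Lemma aP i j k : (p ^ k %| p ^ i * q ^ j) = (k <= i). Proof. exact: atPg. Qed.
Lemma aQ i j k : (q ^ k %| p ^ i * q ^ j) = (k <= j). Proof. exact: atQg. Qed.
Lemma aP1 i j : (p %| p ^ i * q ^ j) = (0 < i). Proof. by rewrite -{1}(expn1 p) aP. Qed.
Lemma aQ1 i j : (q %| p ^ i * q ^ j) = (0 < j). Proof. by rewrite -{1}(expn1 q) aQ. Qed.

Lemma lt' i j : i <= 2 -> j <= 1 -> (i < 2) || (j < 1) -> p ^ i * q ^ j < n.
Proof.
move=> i2 j1 h; rewrite -{2}(expn1 q).
move/orP: h => [] h.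
  apply: (@leq_trans (p ^ 2 * q ^ j)).
    by rewrite ltn_pmul2r ?expn_gt0 ?q_gt0' // ltn_exp2l ?prime_gt1.
  by rewrite leq_mul2l leq_exp2l ?prime_gt1 // j1 orbT.
apply: (@leq_trans (p ^ i * q ^ 1)).
  by rewrite ltn_pmul2l ?expn_gt0 ?p_gt0' // ltn_exp2l ?prime_gt1.
by rewrite leq_mul2r leq_exp2l ?prime_gt1 // i2 orbT.
Qed.

Lemma vE' (x : 'I_n) : (x \in zdg_vertices n) = ~~ ((p ^ 2 %| x) && (q %| x)) && ((p %| x) || (q %| x)).
Proof.
rewrite inE -zero_at'; apply/andP/andP => -[nz H]; split => //.
  case/existsP: H => y /andP[ynz dv].
  apply/negPn/negP; rewrite negb_or => /andP[px qx].
  have : n %| y.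
    move: dv; rewrite /zmul_zero -/(dvdn n (x * y)) Gauss_dvdr //.
    by rewrite coprimeMl !coprime_pexpl // !prime_coprime // px qx.
  move/(dvdn_leq); rewrite lt0n ynz leqNgt ltn_ord; by move/(_ isT).
apply/existsP; case/orP: H => [px|qx].
  have lt : p ^ 1 * q ^ 1 < n by apply: lt'.
  exists (Ordinal lt); rewrite /= -lt0n muln_gt0 !expn_gt0 p_gt0' q_gt0' /=.
  by rewrite /zmul_zero -/(dvdn n _) adjE' /= px aP1 aQ1 !orbT.
have lt : p ^ 2 * q ^ 0 < n by apply: lt'.
exists (Ordinal lt); rewrite /= -lt0n muln_gt0 !expn_gt0 p_gt0' q_gt0' /=.
by rewrite /zmul_zero -/(dvdn n _) adjE' /= qx aP !orbT.
Qed.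

Definition sh' (c : nat) (y : 'I_n) : 'I_n := Ordinal (ltn_pmod (y + c) n_gt0').

Lemma sh_inj' c : injective (sh' c).
Proof. move=> x y /(congr1 (@nat_of_ord _)) /= e; apply: val_inj; exact: (shift_inj (ltn_ord x) (ltn_ord y) e). Qed.

Lemma sh_b' c (hc : c < n) (y : 'I_n) : nat_of_ord y != 0 -> sh' c y != Ordinal hc.
Proof.
move=> y0; apply/negP => /eqP /(congr1 (@nat_of_ord _)) /= e.
have : y = 0 :> nat.
  apply: (shift_inj (ltn_ord y) n_gt0' (c := c)); by rewrite e add0n modn_small.
by move/eqP: y0.
Qed.

Definition Bset (v : 'I_n) (s : bool) :=
  [set y : 'I_n | [&& y \in zdg_vertices n, v != y, n %| v * y & ~~ (q %| y) == s]].

Lemma inB (v y : 'I_n) s : (y \in Bset v s) = [&& y \in zdg_vertices n, v != y, n %| v * y & ~~ (q %| y) == s].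
Proof. by rewrite inE. Qed.

Lemma neqd' d (v a : 'I_n) : (d %| v) != (d %| a) -> v != a.
Proof. by apply: contra => /eqP ->. Qed.

Lemma side' (v : 'I_n) : v \in zdg_vertices n -> #|Bset v (~~ (q %| v))| < #|Bset v (q %| v)|.
Proof.
move=> vV; have := vV; rewrite vE' => /andP[zv vpq].
have Bf : forall s y, y \in Bset v s -> [/\ nat_of_ord y != 0, v != y, n %| v * y & ~~ (q %| y) = s].
  move=> s y; rewrite inB => /and4P[yV vy adj /eqP iy]; split => //.
  by move: yV; rewrite vE' -zero_at' => /andP[].
case Qv: (q %| v) => /=.
  case Pv: (p %| v).
    have hc : p ^ 1 * q ^ 0 < n by apply: lt'.
    have cp : p ^ 1 * q ^ 0 = p by rewrite expn1 expn0 muln1.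
    apply: (inj_lt (f := sh' (p ^ 1 * q ^ 0)) (b := Ordinal hc)).
    - by move=> y1 y2 _ _; apply: sh_inj'.
    - move=> y /Bf[y0 vy adj iy].
      have qy : q %| y by move: iy; case: (q %| y).
      have py : p %| y.
        move: adj zv; rewrite adjE' Pv Qv qy !orbT !andbT /=.
        by case: (p ^ 2 %| v) => //= /orP[/dvd_sq|].
      have pn : p %| n by rewrite dvdn_mulr // expnS dvdn_mulr.
      have qn : q %| n by rewrite dvdn_mull.
      have hp : p %| sh' (p ^ 1 * q ^ 0) y.
        by rewrite /= (dvd_modn _ pn) dvdn_add // aP1.
      have hq : (q %| sh' (p ^ 1 * q ^ 0) y) = false.
        by rewrite /= (dvd_modn _ qn) (dvdn_addr _ qy) aQ1.
      rewrite inB; apply/and4P; split.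
      + by rewrite vE' hq hp andbF.
      + by apply: (neqd' (d := q)); rewrite Qv hq.
      + by rewrite adjE' Pv hp Qv !orbT.
      + by rewrite hq.
    - rewrite inB; apply/and4P; split => /=.
      + by rewrite vE' aP aQ1 aP1.
      + by apply: (neqd' (d := q)); rewrite Qv aQ1.
      + by rewrite adjE' Pv aP1 Qv !orbT.
      + by rewrite aQ1.
    - move=> y /Bf[y0 _ _ _]; exact: sh_b'.
  have hc : p ^ 2 * q ^ 0 < n by apply: lt'.
  apply: (inj_lt0 (b := Ordinal hc)).
    move=> y /Bf[y0 vy adj iy].
    have qy : q %| y by move: iy; case: (q %| y).
    have P2v : (p ^ 2 %| v) = false by apply/negP => /dvd_sq; rewrite Pv.
    move: adj y0; rewrite adjE' P2v Pv qy zero_at' qy /=.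
    by case: (p ^ 2 %| y).
  rewrite inB; apply/and4P; split => /=.
  + by rewrite vE' aP aQ1 aP1.
  + by apply: (neqd' (d := p)); rewrite Pv aP1.
  + by rewrite adjE' aP Qv !orbT.
  + by rewrite aQ1.
have hc : p ^ 1 * q ^ 1 < n by apply: lt'.
have Pv : p %| v by move: vpq; rewrite Qv orbF.
apply: (inj_lt0 (b := Ordinal hc)).
  move=> y /Bf[y0 vy adj iy].
  have qy : (q %| y) = false by move: iy; case: (q %| y).
  by move: adj; rewrite adjE' Qv qy andbF.
rewrite inB; apply/and4P; split => /=.
+ by rewrite vE' aP aQ1 aP1.
+ by apply: (neqd' (d := q)); rewrite Qv aQ1.
+ by rewrite adjE' Pv aP1 aQ1 !orbT.
+ by rewrite aQ1.
Qed.

Lemma main1 : zdg_very_cost_effective n.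
Proof.
pose S := [set x in zdg_vertices n | ~~ (q %| x)].
have E (v : 'I_n) (T : {set 'I_n}) s : v \in zdg_vertices n ->
   (forall y, (y \in T) = (y \in zdg_vertices n) && (~~ (q %| y) == s)) ->
   nbhd (zdg_vertices n) (@zdg_adj n) v :&: T = Bset v s.
  move=> vV hT; apply/setP => y; rewrite in_setI hT inB /nbhd in_set /zdg_adj /zmul_zero vV /=.
  by case: (y \in zdg_vertices n); case: (v != y); case: (~~ (q %| y) == s).
have inS y : (y \in S) = (y \in zdg_vertices n) && ~~ (q %| y) by rewrite /S in_set.
exists S; split; first by apply/subsetP => x; rewrite inS => /andP[].
split; apply/forall_inP => v.
  rewrite inS; case/andP => vV iv; rewrite /very_cost_effective_vertex.
  rewrite (E v S true vV) ?(E v _ false vV); first by have := side' vV; rewrite (negbTE iv).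
    by move=> y; rewrite in_setD inS; case: (y \in zdg_vertices n); case: (q %| y).
  by move=> y; rewrite inS; case: (q %| y).
rewrite in_setD inS; case/andP => niv vV; rewrite vV /= in niv.
rewrite /very_cost_effective_vertex.
rewrite (E v _ false vV) ?(E v _ true vV); first by have := side' vV; rewrite negbK in niv; rewrite niv.
  by move=> y; rewrite !in_setD inS; case: (y \in zdg_vertices n); case: (q %| y).
by move=> y; rewrite in_setD inS; case: (y \in zdg_vertices n); case: (q %| y).
Qed.


End One.


Unset Implicit Arguments.

Theorem mainTheorem3 (p q : nat) :
  prime p -> prime q -> p != q ->
  zdg_very_cost_effective (p ^ 2 * q) /\
  (3 <= p -> 3 <= q -> p < q -> zdg_very_cost_effective (p ^ 2 * q ^ 2)).
Proof.
move=> pP qP pq; split; first exact: main1.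
by move=> p3 q3 _; apply: main2.
Qed.
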